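(* There is a constant $a>0$ such that for all $0<r\le\sqrt2$ and all $x\in[0,1]^2$ with $\|x-c\|\ge r/2$, where $c=(\tfrac12,\tfrac12)$, we have $$\mathrm{area}\big(W(x,c;r)\cap[0,1]^2\cap B(c,\|x-c\|)\big)\ge a\,r^5.$$
   Context: $B(z,\rho)$ denotes the closed Euclidean ball in $\mathbb{R}^2$. For $x,y\in\mathbb{R}^2$ and $r>0$, $W(x,y;r):=\{z\in\mathbb{R}^2: B(z,r)\supseteq B(x,r)\cap B(y,\|x-y\|)\}$. *)

(* Defs.v *)
From Stdlib Require Import Reals Lra.
Open Scope R_scope.

Definition pt := (R * R)%type.

Definition dist2 (x y : pt) : R :=
  sqrt ((fst x - fst y) ^ 2 + (snd x - snd y) ^ 2).

Definition ball (z : pt) (rho : R) (w : pt) : Prop := dist2 w z <= rho.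

Definition Wset (x y : pt) (r : R) (z : pt) : Prop :=
  forall w : pt, ball x r w -> ball y (dist2 x y) w -> ball z r w.

Definition unit_square (z : pt) : Prop :=
  0 <= fst z <= 1 /\ 0 <= snd z <= 1.

Record rect := mkRect { ra1 : R; rb1 : R; ra2 : R; rb2 : R }.

Definition rect_area (Q : rect) : R :=
  Rmax 0 (rb1 Q - ra1 Q) * Rmax 0 (rb2 Q - ra2 Q).

Definition in_rect (Q : rect) (z : pt) : Prop :=
  ra1 Q <= fst z <= rb1 Q /\ ra2 Q <= snd z <= rb2 Q.

(* "area(S) >= t" for the 2-dimensional Lebesgue (outer) measure:
   every countable cover of S by rectangles has total area (sup of the
   partial sums of the series) at least t. *)
Definition area_ge (S : pt -> Prop) (t : R) : Prop :=
  forall Q : nat -> rect,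
    (forall z, S z -> exists i, in_rect (Q i) z) ->
    forall eps, 0 < eps ->
      exists N, t - eps <= sum_f_R0 (fun i => rect_area (Q i)) N.

(* Main.v *)
Require Import Defs.
From Stdlib Require Import Reals Lra Psatz Classical.
Open Scope R_scope.
Lemma area_ge_le S t t' : area_ge S t -> t' <= t -> area_ge S t'.
Proof.
  intros H Ht Q HQ eps Heps. destruct (H Q HQ eps Heps) as [N HN].
  exists N; lra.
Qed.

Lemma area_ge_sub (S1 S2 : pt -> Prop) t : (forall z, S1 z -> S2 z) -> area_ge S1 t -> area_ge S2 t.
Proof.
  intros Hs H Q HQ eps Heps. apply H; auto.
Qed.

Lemma area_ge_swap (S : pt -> Prop) t : area_ge (fun z => S (snd z, fst z)) t -> area_ge S t.
Proof.
  intros H Q HQ eps Heps.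
  set (Q' := fun i => mkRect (ra2 (Q i)) (rb2 (Q i)) (ra1 (Q i)) (rb1 (Q i))).
  destruct (H Q') with eps as [N HN]; auto.
  - intros [z1 z2] Hz. destruct (HQ _ Hz) as [i Hi]. exists i.
    unfold in_rect in *; simpl in *; tauto.
  - exists N. replace (sum_f_R0 (fun i : nat => rect_area (Q i)) N) with
      (sum_f_R0 (fun i : nat => rect_area (Q' i)) N); auto.
    apply sum_eq. intros i _. unfold Q', rect_area; simpl; ring.
Qed.

Lemma dist2_le p q rho : 0 <= rho ->
  (fst p - fst q)^2 + (snd p - snd q)^2 <= rho^2 -> dist2 p q <= rho.
Proof. intros. unfold dist2. rewrite <- (sqrt_pow2 rho) by auto. apply sqrt_le_1_alt; auto. Qed.

Lemma dist2_sq p q : dist2 p q ^2 = (fst p - fst q)^2 + (snd p - snd q)^2.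
Proof. unfold dist2. rewrite pow2_sqrt; auto. pose proof (pow2_ge_0 (fst p - fst q)). pose proof (pow2_ge_0 (snd p - snd q)). lra. Qed.

Lemma dist2_ge0 p q : 0 <= dist2 p q.
Proof. apply sqrt_pos. Qed.

Lemma dist2_le_sq p q rho : dist2 p q <= rho ->
  (fst p - fst q)^2 + (snd p - snd q)^2 <= rho^2.
Proof. intros H. rewrite <- dist2_sq. apply pow_incr. split; auto. apply dist2_ge0. Qed.

Lemma abs_le_of_sq a b : 0 <= b -> a^2 <= b^2 -> Rabs a <= b.
Proof.
  intros Hb H. destruct (Rle_dec (Rabs a) b) as [|Hn]; auto. exfalso.
  rewrite <- (pow2_abs a) in H. assert (b < Rabs a) by lra. nra.
Qed.

Lemma abs_prod_sum a1 a2 b1 b2 M H : Rabs a1 <= M -> Rabs a2 <= M ->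
  Rabs b1 + Rabs b2 <= H -> Rabs (a1*b1 + a2*b2) <= M*H.
Proof.
  intros H1 H2 H3. eapply Rle_trans; [apply Rabs_triang|]. rewrite !Rabs_mult.
  pose proof (Rabs_pos b1). pose proof (Rabs_pos b2). pose proof (Rabs_pos a1). nra.
Qed.

Lemma Rabs_le_inv x a : Rabs x <= a -> -a <= x <= a.
Proof. intros H. pose proof (Rle_abs x). pose proof (Rle_abs (-x)). rewrite Rabs_Ropp in H1. lra. Qed.

Lemma core_W e1 e2 D1 D2 q1 q2 al t r h d :
  d^2 = e1^2 + e2^2 -> al * d = t -> 0 <= al <= 1 ->
  D1^2 + D2^2 <= r^2 -> (D1 - e1)^2 + (D2 - e2)^2 <= d^2 ->
  Rabs (D1*q1 + D2*q2) <= r*h -> Rabs (e1*q1 + e2*q2) <= d*h -> 0 <= d ->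
  q1^2 + q2^2 <= h^2 -> 2*r*h + t^2 + 2*t*h + h^2 <= al * r^2 ->
  (D1 - al*e1 - q1)^2 + (D2 - al*e2 - q2)^2 <= r^2.
Proof.
  intros Hd Hal Hal01 HD HDe HB HA Hd0 HQ Hk.
  assert (F1 : al * (D1^2 + D2^2) <= 2 * al * (D1*e1 + D2*e2)) by nra.
  assert (F2 : (1 - al) * (D1^2 + D2^2) <= (1 - al) * r^2) by nra.
  assert (F3 : - (D1*q1 + D2*q2) <= r*h) by (apply Rabs_le_inv in HB; lra).
  assert (F4 : al * (e1*q1 + e2*q2) <= t*h).
  { apply Rabs_le_inv in HA. rewrite <- Hal. nra. }
  assert (F5 : al^2 * (e1^2 + e2^2) = t^2) by (rewrite <- Hd, <- Hal; ring).
  nra.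
Qed.

Definition Sset r (x : pt) (z : pt) : Prop :=
  Wset x (1/2, 1/2) r z /\ unit_square z /\ ball (1/2, 1/2) (dist2 x (1/2, 1/2)) z.

Lemma geo r x1 x2 t q1 q2 :
  0 < r -> r <= sqrt 2 -> 0 <= x1 <= 1 -> 0 <= x2 <= 1 ->
  r/2 <= dist2 (x1,x2) (1/2,1/2) ->
  r^2/8 <= t <= r^2/4 -> Rabs q1 + Rabs q2 <= r^3/128 ->
  Sset r (x1,x2) (x1 + t / dist2 (x1,x2) (1/2,1/2) * (1/2 - x1) + q1,
                  x2 + t / dist2 (x1,x2) (1/2,1/2) * (1/2 - x2) + q2).
Proof.
  intros Hr0 Hrs Hx1 Hx2 Hdr Ht Hq.
  assert (Hdsq : dist2 (x1,x2) (1/2,1/2) ^ 2 = (1/2 - x1)^2 + (1/2 - x2)^2)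
    by (rewrite dist2_sq; simpl; ring).
  set (d := dist2 (x1,x2) (1/2,1/2)) in *.
  set (h := r^3/128) in *.
  assert (Hr2 : r^2 <= 2).
  { replace 2 with (sqrt 2 ^ 2) by (rewrite pow2_sqrt; lra). apply pow_incr; lra. }
  assert (Hr : r <= 2) by nra.
  assert (Hd0 : 0 < d) by lra.
  assert (Hd1 : d <= 1) by nra.
  set (al := t / d).
  assert (Hal : al * d = t) by (unfold al; field; lra).
  assert (Ht0 : 0 < t) by nra.
  assert (Htd : t <= d) by nra.
  assert (Hal0 : 0 <= al) by (unfold al; apply Rmult_le_pos; [lra | left; apply Rinv_0_lt_compat; lra]).
  assert (Hal1 : al <= 1) by nra.
  assert (Halt : t <= al) by nra.
  assert (He1 : Rabs (1/2 - x1) <= d). { apply abs_le_of_sq. lra. pose proof (pow2_ge_0 (1/2 - x2)). lra. }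
  assert (He2 : Rabs (1/2 - x2) <= d). { apply abs_le_of_sq. lra. pose proof (pow2_ge_0 (1/2 - x1)). lra. }
  pose proof (Rabs_pos q1). pose proof (Rabs_pos q2).
  assert (Hq1 : -h <= q1 <= h) by (apply Rabs_le_inv; lra).
  assert (Hq2 : -h <= q2 <= h) by (apply Rabs_le_inv; lra).
  assert (HQ : q1^2 + q2^2 <= h^2).
  { rewrite <- (pow2_abs q1), <- (pow2_abs q2). nra. }
  assert (HA : Rabs ((1/2 - x1)*q1 + (1/2 - x2)*q2) <= d*h) by (apply abs_prod_sum; auto).
  assert (Hh0 : 0 <= h) by (unfold h; nra).
  assert (Hh : h <= t) by (unfold h; nra).
  assert (Hh2 : 2*h <= al) by (unfold h; nra).
  assert (Hk : 2*r*h + t^2 + 2*t*h + h^2 <= al * r^2).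
  { assert (K1 : t^2 <= t * r^2 / 4) by nra.
    assert (P : r^2/8 * r^2 <= t * r^2) by (apply Rmult_le_compat_r; nra).
    assert (P2 : 0 <= (2 - r) * (t * r^2)) by (apply Rmult_le_pos; nra).
    assert (P3 : 0 <= (64 - r^2) * r^4) by (apply Rmult_le_pos; nra).
    assert (K2 : 2*r*h <= t * r^2 / 8) by (unfold h; lra).
    assert (K3 : 2*t*h <= t * r^2 / 32) by (unfold h; lra).
    assert (K4 : h^2 <= t * r^2 / 32) by (unfold h; lra).
    assert (K5 : t * r^2 <= al * r^2) by nra.
    assert (K6 : 0 <= t * r^2) by nra. lra. }
  split; [|split].
  - intros [w1 w2] Hw1 Hw2. apply dist2_le; [lra|]. simpl.
    apply dist2_le_sq in Hw1. apply dist2_le_sq in Hw2. simpl in Hw1, Hw2.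
    fold d in Hw2.
    pose proof (pow2_ge_0 (w1 - x1)). pose proof (pow2_ge_0 (w2 - x2)).
    assert (HD1 : Rabs (w1 - x1) <= r) by (apply abs_le_of_sq; lra).
    assert (HD2 : Rabs (w2 - x2) <= r) by (apply abs_le_of_sq; lra).
    assert (HB : Rabs ((w1 - x1)*q1 + (w2 - x2)*q2) <= r*h) by (apply abs_prod_sum; auto).
    pose proof (core_W (1/2 - x1) (1/2 - x2) (w1 - x1) (w2 - x2) q1 q2 al t r h d
       Hdsq Hal (conj Hal0 Hal1) Hw1 ltac:(nra) HB HA ltac:(lra) HQ Hk) as HW.
    nra.
  - unfold unit_square; simpl.
    assert (0 <= (1 - al) * x1 <= 1 - al) by nra.
    assert (0 <= (1 - al) * x2 <= 1 - al) by nra.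
    split; nra.
  - fold d. unfold ball. apply dist2_le; [lra|]. simpl.
    apply Rabs_le_inv in HA.
    assert (G0 : 0 <= (1 - al) * (((1/2 - x1)*q1 + (1/2 - x2)*q2) + d*h))
      by (apply Rmult_le_pos; lra).
    assert (G0' : 0 <= (1 - al) * d) by (apply Rmult_le_pos; lra).
    assert (G2 : ((1 - al)*d + h)^2 <= d^2) by (apply pow_incr; split; lra).
    assert (G3 : (1-al)^2 * d^2 = (1-al)^2 * ((1/2-x1)^2 + (1/2-x2)^2)) by (rewrite Hdsq; ring).
    lra.
Qed.

Lemma abs_half_le e1 e2 d : 0 < d -> d^2 = e1^2 + e2^2 -> e2^2 <= e1^2 -> d/2 <= Rabs e1.
Proof.
  intros Hd Hdsq H. destruct (Rle_dec (d/2) (Rabs e1)) as [|Hn]; auto. exfalso.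
  rewrite <- (pow2_abs e1) in H, Hdsq. pose proof (Rabs_pos e1). nra.
Qed.

From HB Require Import structures.
From mathcomp Require all_boot all_order all_algebra.
From mathcomp Require all_classical all_reals all_analysis.
From mathcomp Require Rstruct measurable_realfun.

Module MC.
Import all_boot all_order all_algebra.
Import all_classical all_reals all_analysis.
Import Rstruct measurable_realfun.
Import Order.TTheory GRing.Theory Num.Theory.
Local Open Scope classical_set_scope.
Local Open Scope ring_scope.

Lemma para_area_mc (a b h : R) (g : R -> R) (S : pt -> Prop) :
  a <= b -> 0 <= h ->
  (forall u v, a <= u <= b -> g u - h <= v <= g u + h -> S (u,v)) ->
  forall Q : nat -> rect, (forall z, S z -> exists i, in_rect (Q i) z) ->
  (((b - a) * (h *+ 2))%:E <= \sum_(0 <= i <oo) (rect_area (Q i))%:E)%E.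
Proof.
have L (c d : R) : ((@lebesgue_measure R) `[c, d] = (Rmax 0 (d - c))%:E)%E.
  rewrite lebesgue_measure_itv /= lte_fin.
  case: ltP => cd.
    by rewrite -EFinD Rmax_right //; apply/RleP; rewrite subr_ge0 ltW.
  by rewrite Rmax_left //; apply/RleP; rewrite subr_le0.
move=> ab h0 HS Q HQ.
pose Qs i : set (measurableTypeR R * measurableTypeR R) := `[ra1 (Q i), rb1 (Q i)] `*` `[ra2 (Q i), rb2 (Q i)].
have mQs i : measurable (Qs i) by apply: measurableX; exact: measurable_itv.
pose U := \bigcup_i Qs i.
have mU : measurable U by exact: bigcupT_measurable.
have muQ i : ((@lebesgue_measure R) \x (@lebesgue_measure R))%E (Qs i) = (rect_area (Q i))%:E.
  rewrite product_measure1E; [|exact: measurable_itv..].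
  rewrite /rect_area EFinM; congr (_ * _)%E; apply: L.
have H2 := @measure_sigma_subadditive _ _ _ ((@lebesgue_measure R) \x (@lebesgue_measure R))%E U Qs mQs mU (fun z Uz => Uz).
rewrite (eq_eseriesr (fun i _ => muQ i)) in H2.
apply: (le_trans _ H2).
rewrite /product_measure1.
have -> : ((b - a) * (h *+ 2))%:E = (\int[@lebesgue_measure R]_x ((\1_(`[a, b] : set (measurableTypeR R)) x)%:E * (h *+ 2)%:E))%E.
  rewrite ge0_integralZr//; last by rewrite lee_fin mulrn_wge0.
    rewrite integral_indic// setIT EFinM; congr (_ * _)%E.
    symmetry; apply: eq_trans (L a b) _; congr EFin.
    rewrite Rmax_right //; apply/RleP; rewrite subr_ge0 //.
  apply/measurable_realfun.measurable_EFinP; exact: measurable_indic.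
apply: ge0_le_integral => //.
- by move=> x _; rewrite mule_ge0 // lee_fin mulrn_wge0.
- under eq_fun do rewrite -EFinM. apply/measurable_EFinP; apply: measurable_funM => //; exact: measurable_indic.
- exact: measurable_fun_xsection.
- move=> x _ /=; rewrite indicE; case: (boolP (x \in _)) => xab.
    rewrite mul1e.
    apply: (@le_trans _ _ ((@lebesgue_measure R) `[g x - h, g x + h])).
      rewrite le_eqVlt; apply/orP; left; apply/eqP/esym; apply: eq_trans (L _ _) _; congr EFin.
      have e : ((g x + h) - (g x - h) = h *+ 2)%R by rewrite opprB addrC addrA subrK mulr2n.
      rewrite RminusE e Rmax_right //.
      by apply/RleP; rewrite mulrn_wge0.
    apply: le_measure; rewrite ?inE.
    - exact: measurable_itv.
    - exact (measurable_xsection x mU).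
    move=> y /= yI; rewrite /xsection /= inE.
    have Sxy : S (x, y).
      apply: HS; [by move: xab; rewrite inE /= in_itv | move: yI; exact (fun H => H)].
    have [i Hi] := HQ (x, y) Sxy.
    exists i => //. case: Hi => [[h1 h2] [h3 h4]]. by split; rewrite /= ?in_itv /=; apply/andP; split; apply/RleP.
  by rewrite /= mul0e measure_ge0.
Qed.

Lemma sum_f_R0_big (f : nat -> R) n : sum_f_R0 f n = \sum_(0 <= i < n.+1) f i.
Proof. elim: n => [|n IH]; first by rewrite big_nat1. by rewrite big_nat_recr //= -IH. Qed.

Lemma series_area (S : pt -> Prop) (t : R) :
  (forall Q : nat -> rect, (forall z, S z -> exists i, in_rect (Q i) z) ->
     (t%:E <= \sum_(0 <= i <oo) (rect_area (Q i))%:E)%E) -> area_ge S t.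
Proof.
move=> H Q HQ eps eps0.
have Ht := H Q HQ.
have f0 i : 0 <= rect_area (Q i).
  rewrite /rect_area; apply/RleP; apply: Rmult_le_pos; apply: Rmax_l.
apply: NNPP => Hn.
have lt N : sum_f_R0 (fun i => rect_area (Q i)) N < t - eps.
  apply/RltP; apply: Rnot_le_lt => Hle; apply: Hn; exists N; exact Hle.
have : (\sum_(0 <= i <oo) (rect_area (Q i))%:E <= (t - eps)%:E)%E.
  apply: lime_le; first by apply: is_cvg_nneseries => n _ _; rewrite lee_fin.
  apply: nearW => n; case: n => [|n].
    rewrite big_geq // lee_fin; apply: (le_trans (f0 0%N)).
    by have := lt 0%N => /= /ltW.
  rewrite sumEFin lee_fin -sum_f_R0_big; exact: ltW (lt n).
move=> H1; have := le_trans Ht H1; rewrite lee_fin => /RleP Hc.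
have Hc' : Rle t (Rminus t eps) by exact Hc.
have eps0' : Rlt 0 eps by exact eps0.
lra.
Qed.

Lemma para_area_mc2 (a b h : R) (g : R -> R) (S : pt -> Prop) :
  a <= b -> 0 <= h ->
  (forall u v, a <= u <= b -> g u - h <= v <= g u + h -> S (u,v)) ->
  area_ge S ((b - a) * (h *+ 2)).
Proof. move=> ab h0 HS; apply: series_area => Q HQ; exact: (para_area_mc _ _ _ _ _ ab h0 HS Q HQ). Qed.

Local Open Scope R_scope.
Lemma para_area (a b h : R) (g : R -> R) (S : pt -> Prop) :
  a <= b -> 0 <= h ->
  (forall u v, a <= u <= b -> g u - h <= v <= g u + h -> S (u,v)) ->
  area_ge S ((b - a) * (2*h)).
Proof.
move=> ab h0 HS.
have -> : 2 * h = GRing.natmul h 2 by rewrite mulr2n -RplusE; lra.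
apply: (para_area_mc2 a b h g S); [by apply/RleP | by apply/RleP |].
move=> u v /andP[/RleP H1 /RleP H2] /andP[/RleP H3 /RleP H4]; exact: (HS u v (conj H1 H2) (conj H3 H4)).
Qed.
End MC.

Open Scope R_scope.
Lemma para_affine (S : pt -> Prop) (x1 x2 k m t1 t2 h : R) :
  k <> 0 -> t1 <= t2 -> 0 <= h ->
  (forall t v, t1 <= t <= t2 -> Rabs v <= h -> S (x1 + k*t, x2 + m*t + v)) ->
  area_ge S (Rabs k * (t2 - t1) * (2*h)).
Proof.
  intros Hk Ht Hh HS.
  assert (Hgen : forall a b, a <= b -> b - a = Rabs k * (t2 - t1) ->
     (forall u, a <= u <= b -> t1 <= (u - x1)/k <= t2) ->
     area_ge S (Rabs k * (t2 - t1) * (2*h))).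
  { intros a b Hab Hba Hu.
    replace (Rabs k * (t2 - t1) * (2*h)) with ((b - a) * (2*h)) by (rewrite Hba; ring).
    apply (MC.para_area a b h (fun u => x2 + m*((u - x1)/k))); auto.
    intros u v Hu1 Hv.
    replace (u, v) with (x1 + k*((u - x1)/k), x2 + m*((u - x1)/k) + (v - (x2 + m*((u - x1)/k)))).
    - apply HS; auto. apply Rabs_le. lra.
    - f_equal; [field; auto | ring]. }
  destruct (Rlt_or_le 0 k) as [Hk0|Hk0].
  - apply (Hgen (x1 + k*t1) (x1 + k*t2)).
    + nra.
    + rewrite Rabs_pos_eq by lra. ring.
    + intros u Hu. split.
      * apply (Rmult_le_reg_l k); auto.
        replace (k * ((u - x1)/k)) with (u - x1) by (field; auto). lra.
      * apply (Rmult_le_reg_l k); auto.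
        replace (k * ((u - x1)/k)) with (u - x1) by (field; auto). lra.
  - assert (k < 0) by lra.
    apply (Hgen (x1 + k*t2) (x1 + k*t1)).
    + nra.
    + rewrite Rabs_left by lra. ring.
    + intros u Hu. split.
      * apply (Rmult_le_reg_l (-k)); [lra|].
        replace (-k * ((u - x1)/k)) with (-(u - x1)) by (field; auto). lra.
      * apply (Rmult_le_reg_l (-k)); [lra|].
        replace (-k * ((u - x1)/k)) with (-(u - x1)) by (field; auto). lra.
Qed.
Theorem mainTheorem12 :
  exists a : R, 0 < a /\
    forall (r : R) (x : pt),
      0 < r -> r <= sqrt 2 ->
      unit_square x ->
      r / 2 <= dist2 x (1/2, 1/2) ->
      area_ge
        (fun z => Wset x (1/2, 1/2) r z /\ unit_square z /\
                  ball (1/2, 1/2) (dist2 x (1/2, 1/2)) z)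
        (a * r ^ 5).
Proof.
  exists (1/2048). split; [lra|].
  intros r [x1 x2] Hr0 Hrs [Hx1 Hx2] Hd. simpl in Hx1, Hx2.
  change (area_ge (Sset r (x1,x2)) (1/2048 * r^5)).
  assert (Hdsq : dist2 (x1,x2) (1/2,1/2) ^ 2 = (1/2 - x1)^2 + (1/2 - x2)^2)
    by (rewrite dist2_sq; simpl; ring).
  pose proof (geo r x1 x2) as G.
  set (d := dist2 (x1,x2) (1/2,1/2)) in *.
  assert (Hd0 : 0 < d) by lra.
  assert (Hr5 : 0 <= r^5) by (apply pow_le; lra).
  assert (Hh : 0 <= 2 * (r^3/128)) by (assert (0 <= r^3) by (apply pow_le; lra); lra).
  destruct (Rle_or_lt ((1/2 - x2)^2) ((1/2 - x1)^2)) as [HA|HB].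
  - pose proof (abs_half_le (1/2 - x1) (1/2 - x2) d Hd0 Hdsq HA) as He.
    assert (Hk : (1/2 - x1)/d <> 0).
    { intro H0. assert (1/2 - x1 = 0) by (apply (Rmult_eq_reg_r (/d)); [lra|];
        apply Rinv_neq_0_compat; lra). rewrite H in He. rewrite Rabs_R0 in He. lra. }
    apply area_ge_le with (Rabs ((1/2 - x1)/d) * (r^2/4 - r^2/8) * (2*(r^3/128))).
    + apply para_affine with (x1 := x1) (x2 := x2) (m := (1/2 - x2)/d); [exact Hk | nra | lra |].
      intros t v Ht Hv.
        replace (x1 + (1/2 - x1)/d * t, x2 + (1/2 - x2)/d * t + v) with
          (x1 + t/d * (1/2 - x1) + 0, x2 + t/d * (1/2 - x2) + v)
          by (f_equal; field; lra).
        apply G; auto. rewrite Rabs_R0. lra.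
    + replace (Rabs ((1/2 - x1)/d)) with (Rabs (1/2 - x1) * / d)
        by (unfold Rdiv; rewrite Rabs_mult, Rabs_inv, (Rabs_pos_eq d) by lra; ring).
      assert (Hq : / 2 <= Rabs (1/2 - x1) * / d).
      { apply (Rmult_le_reg_r d); [lra|]. rewrite Rmult_assoc, Rinv_l by lra. lra. }


      set (A := Rabs (1/2 - x1) * / d) in *. assert (P : /2 * r^5 <= A * r^5) by (apply Rmult_le_compat_r; lra). lra.
  - assert (HA : (1/2 - x1)^2 <= (1/2 - x2)^2) by lra.
    assert (Hdsq' : d^2 = (1/2 - x2)^2 + (1/2 - x1)^2) by lra.
    pose proof (abs_half_le (1/2 - x2) (1/2 - x1) d Hd0 Hdsq' HA) as He.
    assert (Hk : (1/2 - x2)/d <> 0).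
    { intro H0. assert (1/2 - x2 = 0) by (apply (Rmult_eq_reg_r (/d)); [lra|];
        apply Rinv_neq_0_compat; lra). rewrite H in He. rewrite Rabs_R0 in He. lra. }
    apply area_ge_swap.
    apply area_ge_le with (Rabs ((1/2 - x2)/d) * (r^2/4 - r^2/8) * (2*(r^3/128))).
    + apply para_affine with (x1 := x2) (x2 := x1) (m := (1/2 - x1)/d); [exact Hk | nra | lra |].
      intros t v Ht Hv. simpl.
        replace (x1 + (1/2 - x1)/d * t + v, x2 + (1/2 - x2)/d * t) with
          (x1 + t/d * (1/2 - x1) + v, x2 + t/d * (1/2 - x2) + 0)
          by (f_equal; field; lra).
        apply G; auto. rewrite Rabs_R0. lra.
    + replace (Rabs ((1/2 - x2)/d)) with (Rabs (1/2 - x2) * / d)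
        by (unfold Rdiv; rewrite Rabs_mult, Rabs_inv, (Rabs_pos_eq d) by lra; ring).
      assert (Hq : / 2 <= Rabs (1/2 - x2) * / d).
      { apply (Rmult_le_reg_r d); [lra|]. rewrite Rmult_assoc, Rinv_l by lra. lra. }


      set (A := Rabs (1/2 - x2) * / d) in *. assert (P : /2 * r^5 <= A * r^5) by (apply Rmult_le_compat_r; lra). lra.
Qed.
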